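(* Let $\alpha\in\mathbb{R}$ with $\alpha\neq 1$. Then for every $\beta\in\mathbb{R}$, the sequence $\{k^2+\alpha k+\beta\}_{k=0}^{\infty}$ is not a Legendre multiplier sequence.
   Context: The Legendre polynomials $\mathfrak{Le}_n(x)$ are defined by $\frac{1}{\sqrt{1-2xt+t^2}}=\sum_{k=0}^{\infty}\mathfrak{Le}_k(x)t^k$. A real sequence $\{\gamma_k\}_{k=0}^{\infty}$ is a Legendre multiplier sequence if, for every $n$ and all real $a_0,\dots,a_n$, the polynomial $\sum_{k=0}^n a_k\gamma_k\mathfrak{Le}_k(x)$ has only real zeros whenever $\sum_{k=0}^n a_k\mathfrak{Le}_k(x)$ has only real zeros. *)

(* Defs.v *)
From mathcomp Require Import all_boot all_algebra.
From mathcomp Require Import reals complex.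
Set Implicit Arguments. Unset Strict Implicit. Unset Printing Implicit Defensive.
Import GRing.Theory Num.Theory.
Local Open Scope ring_scope.

(* Legendre polynomials, given by the three-term recurrence that is equivalent
   to the generating function 1/sqrt(1-2xt+t^2) = sum_k Le_k(x) t^k:
   Le_0 = 1, Le_1 = x, (n+2) Le_{n+2} = (2n+3) x Le_{n+1} - (n+1) Le_n. *)
Fixpoint legendre_pair (R : realType) (n : nat) : {poly R} * {poly R} :=
  match n with
  | 0 => (1, 'X)
  | n'.+1 =>
      let (p, q) := legendre_pair R n' in
      (q, (n'.+2%:R)^-1 *: ((n'.*2.+3)%:R *: ('X * q) - (n'.+1)%:R *: p))
  end.

Definition legendre (R : realType) (n : nat) : {poly R} := (legendre_pair R n).1.

(* A real polynomial has only real zeros: every complex zero is real.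
   Convention: the zero polynomial is regarded as having only real zeros. *)
Definition only_real_zeros (R : realType) (p : {poly R}) : Prop :=
  p = 0 \/
  forall z : complex R, root (map_poly (fun c : R => (c%:C)%C) p) z -> Im z = 0.

Definition legendre_multiplier_sequence (R : realType) (g : nat -> R) : Prop :=
  forall (n : nat) (a : nat -> R),
    only_real_zeros (\sum_(k < n.+1) a k *: legendre R k) ->
    only_real_zeros (\sum_(k < n.+1) (a k * g k) *: legendre R k).

(* Main.v *)
Require Import Defs.
From mathcomp Require Import all_boot all_algebra.
From mathcomp Require Import reals complex.
From mathcomp Require Import polyrcf.
From mathcomp Require Import ring lra.
Import order.Order.TTheory GRing.Theory Num.Theory.
Local Open Scope ring_scope.

Section L.
Variable R : realType.
Local Notation N n := (n%:R : R).

Definition E0 : {poly R} := Poly [:: 1].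
Definition E1 : {poly R} := Poly [:: 0; 1].
Definition E2 : {poly R} := Poly [:: -(N 1/N 2); 0; N 3/N 2].
Definition E3 : {poly R} := Poly [:: 0; -(N 3/N 2); 0; N 5/N 2].
Definition E4 : {poly R} := Poly [:: N 3/N 8; 0; -(N 15/N 4); 0; N 35/N 8].
Definition E5 : {poly R} := Poly [:: 0; N 15/N 8; 0; -(N 35/N 4); 0; N 63/N 8].
Definition E6 : {poly R} := Poly [:: -(N 5/N 16); 0; N 105/N 16; 0; -(N 315/N 16); 0; N 231/N 16].

Ltac polyeq := apply/polyP; do 8?[case]; intros; rewrite !(coefZ, coefB, coefXM, coef_Poly);
  rewrite /= ?doubleS ?double0; 
  (try field); rewrite ?nth_nil //.

Lemma lpS {n p q} : legendre_pair R n = (p, q) -> legendre_pair R n.+1 =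
  (q, (n.+2%:R)^-1 *: ((n.*2.+3)%:R *: ('X * q) - (n.+1)%:R *: p)).
Proof. by move=> H; rewrite /= H. Qed.

Lemma lp0 : legendre_pair R 0 = (E0, E1).
Proof.
rewrite /= /E0 /E1; congr pair; apply/polyP => i; rewrite coef_Poly ?coefX ?coefC ?coef1;
  do 2?[case: i => [|i]]; rewrite /= ?nth_nil //.
Qed.
Lemma lp1 : legendre_pair R 1 = (E1, E2).
Proof. rewrite (lpS lp0); congr pair; polyeq. Qed.
Lemma lp2 : legendre_pair R 2 = (E2, E3).
Proof. rewrite (lpS lp1); congr pair; polyeq. Qed.
Lemma lp3 : legendre_pair R 3 = (E3, E4).
Proof. rewrite (lpS lp2); congr pair; polyeq. Qed.
Lemma lp4 : legendre_pair R 4 = (E4, E5).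
Proof. rewrite (lpS lp3); congr pair; polyeq. Qed.
Lemma lp5 : legendre_pair R 5 = (E5, E6).
Proof. rewrite (lpS lp4); congr pair; polyeq. Qed.
End L.

Definition spread {T : nmodType} (s : seq T) : seq T := flatten [seq [:: c; 0] | c <- s].

Lemma horner_spread (K : comNzRingType) (s : seq K) x :
  (Poly (spread s)).[x] = (Poly s).[x ^+ 2].
Proof.
elim: s => [|c s IH] /=; first by rewrite !horner0.
by rewrite !horner_cons -/(spread s) IH addr0 -mulrA -expr2.
Qed.

Lemma map_spread (A B : nmodType) (f : A -> B) (s : seq A) : f 0 = 0 ->
  map f (spread s) = spread (map f s).
Proof. move=> f0; elim: s => [|c s IH] //=. rewrite f0 -/(spread s) -/(spread (map f s)) IH. done. Qed.

Section R.
Variable R : realType.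

Lemma Im_nonreal (t : R) : t != 0 -> 'Im ((Complex 0 t) : R[i]) != 0.
Proof.
move=> t0; apply/negP => /eqP /Creal_ImP; rewrite realE !lecE /=.
by case/orP=> /andP[/eqP ht _]; move/eqP: t0; apply.
Qed.

Lemma root_from_neg (s : seq R) y : y < 0 -> (Poly s).[y] = 0 ->
  exists z : R[i], root (map_poly (fun c : R => (c%:C)%C) (Poly (spread s))) z /\ 'Im z != 0.
Proof.
move=> y0 hy.
have hpos : 0 < Num.sqrt (- y) by rewrite sqrtr_gt0 oppr_gt0.
exists (Complex 0 (Num.sqrt (-y))); split; last by apply: Im_nonreal; rewrite gt_eqF.
have hz : (Complex 0 (Num.sqrt (-y))) ^+ 2 = (y%:C)%C.
  rewrite [Complex _ _]complexE /= rmorph0 add0r exprMn sqr_i -rmorphXn.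
  by rewrite sqr_sqrtr ?oppr_ge0 ?ltW // mulN1r -rmorphN opprK.
rewrite /root map_Poly_id0 ?rmorph0 // map_spread ?rmorph0 // horner_spread hz.
rewrite -map_Poly_id0 ?rmorph0 // horner_map hy rmorph0 //.
Qed.

Lemma neg_root (Q : {poly R}) : Q != 0 -> sgp_minfty Q * Num.sg Q.[0] = -1 ->
  exists2 y, y < 0 & Q.[y] = 0.
Proof.
move=> Q0 hs.
set b := cauchy_bound Q.
have hb : Num.sg Q.[-b] = sgp_minfty Q.
  apply: (sgp_minftyP (le_cauchy_bound Q0)); by rewrite in_itv /= lexx.
have b0 : - b <= 0 by rewrite oppr_le0 cauchy_bound_ge0.
have hm : Q.[-b] * Q.[0] <= 0.
  by rewrite -sgr_le0 sgrM hb hs lerN10.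
have [x hx hr] := polyrcf.poly_ivt b0 hm.
have hx2 : x <= 0 by move: hx; rewrite in_itv /= => /andP[].
have q0 : Q.[0] != 0.
  by apply/negP => /eqP h; move: hs; rewrite h sgr0 mulr0 => /eqP; rewrite eq_sym oppr_eq0 oner_eq0.
exists x; last by apply/eqP.
rewrite lt_neqAle hx2 andbT; apply/negP => /eqP hx0; move: hr; rewrite /root hx0.
by rewrite (negbTE q0).
Qed.
End R.

Section Main.
Variable R : realType.
Local Notation N n := (n%:R : R).

Lemma leg0 : legendre R 0 = E0 R. Proof. by rewrite /legendre lp0. Qed.
Lemma leg1 : legendre R 1 = E1 R. Proof. by rewrite /legendre lp1. Qed.
Lemma leg2 : legendre R 2 = E2 R. Proof. by rewrite /legendre lp2. Qed.
Lemma leg3 : legendre R 3 = E3 R. Proof. by rewrite /legendre lp3. Qed.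
Lemma leg4 : legendre R 4 = E4 R. Proof. by rewrite /legendre lp4. Qed.
Lemma leg5 : legendre R 5 = E5 R. Proof. by rewrite /legendre lp5. Qed.
Lemma leg6 : legendre R 6 = E6 R. Proof. by rewrite /legendre (@lpS R _ _ _ (lp5 R)). Qed.

Lemma test (g : nat -> R) n (a : nat -> R) (s : seq R) :
  \sum_(k < n.+1) a k *: legendre R k = 'X^n ->
  \sum_(k < n.+1) (a k * g k) *: legendre R k = Poly (spread s) ->
  sgp_minfty (Poly s) * Num.sg (Poly s).[0] = -1 ->
  ~ legendre_multiplier_sequence g.
Proof.
move=> h1 h2 hs LMS.
have q0 : (Poly s).[0] != 0.
  by apply/negP => /eqP h; move: hs; rewrite h sgr0 mulr0 => /eqP; rewrite eq_sym oppr_eq0 oner_eq0.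
have Q0 : Poly s != 0 by apply: contraNneq q0 => ->; rewrite horner0.
have [y y0 hy] := @neg_root R _ Q0 hs.
have [z [hz hIm]] := @root_from_neg R _ _ y0 hy.
have HX : only_real_zeros ('X^n : {poly R}).
  right => z'; rewrite map_polyXn => /rootP; rewrite hornerXn => /eqP.
  rewrite expf_eq0 => /andP[_ /eqP ->]; apply/Creal_ImP; exact: real0.
have := LMS n a; rewrite h1 h2 => /(_ HX) [hq|hr].
  have : (Poly (spread s)).[0] = 0 by rewrite hq horner0.
  by rewrite horner_spread expr0n /= => h0; rewrite h0 eqxx in q0.
by move: hIm; rewrite hr // eqxx.
Qed.

Ltac sumeq := apply/polyP; do 8?[case]; intros; rewrite ?coef_Poly;
  rewrite !big_ord_recr big_ord0 /= ?leg0 ?leg1 ?leg2 ?leg3 ?leg4 ?leg5 ?leg6;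
  rewrite !(coefD, coefZ, coef_Poly, coefXn, coef0) /= ?natrX ?nth_nil; (try field); rewrite ?nth_nil //.

Definition gg (alpha beta : R) := fun k : nat => (k ^ 2)%:R + alpha * k%:R + beta.

Lemma test2 alpha beta : (N 4 + alpha * N 2 + beta) * (N 4 + alpha * N 2) < 0 ->
  ~ legendre_multiplier_sequence (gg alpha beta).
Proof.
move=> h.
apply: (@test _ 2 (fun k => if k == 0%N then N 1 / N 3 else if k == 2%N then N 2 / N 3 else 0)
   [:: -((N 4 + alpha * N 2)/ N 3); N 4 + alpha * N 2 + beta]).
- sumeq.
- rewrite /gg; sumeq.
- have hl : N 4 + alpha * N 2 + beta != 0.
    by apply/negP => /eqP e; move: h; rewrite e mul0r ltxx.
  rewrite /sgp_minfty lead_coefE horner_coef0 (PolyK (c:=0)) //= -sgrM ltr0_sg //.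
  rewrite expr1; nra.
Qed.


Lemma test4 alpha beta : (N 16 + alpha * N 4 + beta) * (1 - alpha) < 0 ->
  ~ legendre_multiplier_sequence (gg alpha beta).
Proof.
move=> h.
apply: (@test _ 4 (fun k => if k == 0%N then N 1 / N 5 else if k == 2%N then N 4 / N 7
   else if k == 4%N then N 8 / N 35 else 0)
   [:: N 8 / N 35 * (1 - alpha); -((N 72 + N 12 * alpha) / N 7); N 16 + alpha * N 4 + beta]).
- sumeq.
- rewrite /gg; sumeq.
- have hl : N 16 + alpha * N 4 + beta != 0.
    by apply/negP => /eqP e; move: h; rewrite e mul0r ltxx.
  rewrite /sgp_minfty lead_coefE horner_coef0 (PolyK (c:=0)) //= -sgrM ltr0_sg //.
  rewrite expr2; nra.
Qed.

Lemma test6 alpha beta : 0 < (N 36 + alpha * N 6 + beta) * (1 - alpha) ->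
  ~ legendre_multiplier_sequence (gg alpha beta).
Proof.
move=> h.
apply: (@test _ 6 (fun k => if k == 0%N then N 1 / N 7 else if k == 2%N then N 10 / N 21
   else if k == 4%N then N 24 / N 77 else if k == 6%N then N 16 / N 231 else 0)
   [:: N 32 / N 231 * (1 - alpha); N 40 / N 77 * (1 - alpha);
       -((N 300 + N 30 * alpha) / N 11); N 36 + alpha * N 6 + beta]).
- sumeq.
- rewrite /gg; sumeq.
- have hl : N 36 + alpha * N 6 + beta != 0.
    by apply/negP => /eqP e; move: h; rewrite e mul0r ltxx.
  rewrite /sgp_minfty lead_coefE horner_coef0 (PolyK (c:=0)) //= -sgrM ltr0_sg //.
  rewrite !exprS expr0; nra.
Qed.

End Main.

Theorem proposition4p5 (R : realType) (alpha : R) :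
  alpha != 1 ->
  forall beta : R,
    ~ legendre_multiplier_sequence (fun k : nat => (k ^ 2)%:R + alpha * k%:R + beta).
Proof.
move=> ha beta.
change (~ legendre_multiplier_sequence (gg R alpha beta)).
have [a1|a1|a1] := ltgtP alpha 1; last by rewrite a1 eqxx in ha.
- have [g6|g6] := ltP 0 (36%:R + alpha * 6%:R + beta :> R).
    by apply: (@test6 R); nra.
  have [g4|g4] := ltP (16%:R + alpha * 4%:R + beta :> R) 0.
    by apply: (@test4 R); nra.
  by apply: (@test2 R); nra.
- have [g4|g4] := ltP 0 (16%:R + alpha * 4%:R + beta :> R).
    by apply: (@test4 R); nra.
  by apply: (@test2 R); nra.
Qed.
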